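(* Let $X$ be a finite set with similarity function $S$, suppose the target clustering $\mathcal{C}^{\ast}$ satisfies stability with respect to $S$, and suppose the initial clustering has correlation-clustering error $\delta_{cc}$. In the $\eta$-merge model, for any $\eta>2/3$, the interactive algorithm using the global split procedure and the correlation-clustering merge procedure (described below) requires at most $\delta_{cc}$ edit requests to find the target clustering.
   Context: For nonempty $A,A'\subseteq X$, $S(A,A')$ is the average of $S(x,y)$ over $x\in A,y\in A'$. $\mathcal{C}^{\ast}=\{C^{\ast}_1,\dots,C^{\ast}_k\}$ satisfies stability w.r.t. $S$ if for all $i\neq j$, every nonempty proper $A\subset C^{\ast}_i$ and nonempty $A'\subseteq C^{\ast}_j$: $S(A,C^{\ast}_i\setminus A)>S(A,A')$. For a clustering $\mathcal{C}$, $\delta_{cc}=|\{(u,v)\in X\times X: c(u,v)\neq c^{\ast}(u,v)\}|$, where $c(u,v)=1$ if $u,v$ lie in the same cluster of $\mathcal{C}$ and $0$ otherwise, and $c^{\ast}$ is defined likewise for $\mathcal{C}^{\ast}$. Average-linkage tree $T_{glob}$: leaves are singletons; repeatedly merge the two current nodes $N_1,N_2$ with largest $S(N_1,N_2)$ (ties arbitrary) into parent $N_1\cup N_2$ until the root $X$ remains. Process ($\eta$-merge model): starting from the initial clustering, an oracle repeatedly issues split$(C_i)$ (only if current cluster $C_i$ contains points from two or more target clusters) or merge$(C_i,C_j)$ for distinct current clusters (only if some target cluster $C^{\ast}_l$ has $|C_i\cap C^{\ast}_l|\ge\eta|C_i|$ and $|C_j\cap C^{\ast}_l|\ge\eta|C_j|$).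 Split procedure: let $N$ be the deepest node of $T_{glob}$ containing $C_i$, with children $N_1,N_2$; replace $C_i$ by $C_i\cap N_1$ and $C_i\cap N_2$. Correlation-clustering merge procedure: find a node $N$ of $T_{glob}$ of maximal depth with $|N\cap C_i|\ge\eta|C_i|$ and $|N\cap C_j|\ge\eta|C_j|$; if $|C_i|\ge|C_j|$, replace $C_i$ by $C_i\cup(N\cap C_j)$ and $C_j$ by $C_j\setminus N$; otherwise replace $C_i$ by $C_i\setminus N$ and $C_j$ by $C_j\cup(N\cap C_i)$ (empty clusters are discarded). The bound is on the number of requests before the current clustering equals $\mathcal{C}^{\ast}$, for any sequence of allowed requests. *)

(* Defs.v *)
From HB Require Import structures.
From mathcomp Require Import all_boot all_order all_algebra.
Set Implicit Arguments.
Unset Strict Implicit.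
Unset Printing Implicit Defensive.
Import Order.TTheory GRing.Theory Num.Theory.
Local Open Scope ring_scope.

Section ClusterDefs.
Variables (R : realFieldType) (X : finType).

Definition Savg (S : X -> X -> R) (A B : {set X}) : R :=
  (\sum_(x in A) \sum_(y in B) S x y) / (#|A| * #|B|)%:R.

Definition stable (S : X -> X -> R) (T : {set {set X}}) : Prop :=
  forall Ci Cj, Ci \in T -> Cj \in T -> Ci != Cj ->
  forall A A' : {set X}, A != set0 -> A \proper Ci -> A' != set0 -> A' \subset Cj ->
    Savg S A A' < Savg S A (Ci :\: A).

Definition same_cluster (P : {set {set X}}) (u v : X) : bool :=
  [exists B in P, (u \in B) && (v \in B)].

Definition delta_cc (P T : {set {set X}}) : nat :=
  #|[set uv : X * X | same_cluster P uv.1 uv.2 != same_cluster T uv.1 uv.2]|.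

(* Average-linkage tree, represented by its sequence of merges (N1,N2). *)
Definition singletons : {set {set X}} := [set [set x] | x : X].

Definition merge_part (P : {set {set X}}) (p : {set X} * {set X}) :
  {set {set X}} := (p.1 :|: p.2) |: ((P :\ p.1) :\ p.2).

Definition linkage_part (ms : seq ({set X} * {set X})) (i : nat) :=
  foldl merge_part singletons (take i ms).

Definition avg_linkage_tree (S : X -> X -> R) (ms : seq ({set X} * {set X}))
  : Prop :=
  (forall i, (i < size ms)%N ->
     let P := linkage_part ms i in
     let p := nth (set0, set0) ms i in
     [/\ p.1 \in P, p.2 \in P, p.1 != p.2 &
       forall M1 M2, M1 \in P -> M2 \in P -> M1 != M2 ->
         Savg S M1 M2 <= Savg S p.1 p.2])
  /\ linkage_part ms (size ms) = [set [set: X]].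

Definition tree_nodes (ms : seq ({set X} * {set X})) : {set {set X}} :=
  singletons :|: [set p.1 :|: p.2 | p in ms].

Definition depth (ms : seq ({set X} * {set X})) (N : {set X}) : nat :=
  #|[set M in tree_nodes ms | N \proper M]|.

Definition eta_big (eta : R) (N C : {set X}) : bool :=
  eta * #|C|%:R <= #|N :&: C|%:R.

Definition split_allowed (T P : {set {set X}}) (C : {set X}) : Prop :=
  C \in P /\ exists A B, [/\ A \in T, B \in T, A != B,
                            C :&: A != set0 & C :&: B != set0].

Definition merge_allowed (eta : R) (T P : {set {set X}}) (Ci Cj : {set X})
  : Prop :=
  [/\ Ci \in P, Cj \in P, Ci != Cj &
      exists Cl, [&& Cl \in T, eta_big eta Cl Ci & eta_big eta Cl Cj]].

(* global split procedure: Q is a possible outcome of split(C) on P *)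
Definition split_result (ms : seq ({set X} * {set X})) (P : {set {set X}})
  (C : {set X}) (Q : {set {set X}}) : Prop :=
  exists N N1 N2, [/\ N \in tree_nodes ms, C \subset N,
    (forall M, M \in tree_nodes ms -> C \subset M ->
        (depth ms M <= depth ms N)%N),
    (N1, N2) \in ms /\ N = N1 :|: N2 &
    Q = (C :&: N1) |: ((C :&: N2) |: (P :\ C))].

(* correlation-clustering merge procedure; empty clusters discarded *)
Definition merge_result (eta : R) (ms : seq ({set X} * {set X}))
  (P : {set {set X}}) (Ci Cj : {set X}) (Q : {set {set X}}) : Prop :=
  exists N, [/\ N \in tree_nodes ms, eta_big eta N Ci, eta_big eta N Cj,
    (forall M, M \in tree_nodes ms -> eta_big eta M Ci -> eta_big eta M Cj ->
        (depth ms M <= depth ms N)%N) &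
    Q = (if (#|Cj| <= #|Ci|)%N
         then [set Ci :|: (N :&: Cj); Cj :\: N] :|: ((P :\ Ci) :\ Cj)
         else [set Ci :\: N; Cj :|: (N :&: Ci)] :|: ((P :\ Ci) :\ Cj))
        :\ set0].

Definition edit_step (eta : R) (T : {set {set X}}) (ms : seq ({set X} * {set X}))
  (P Q : {set {set X}}) : Prop :=
  (exists C, split_allowed T P C /\ split_result ms P C Q) \/
  (exists Ci Cj, merge_allowed eta T P Ci Cj /\ merge_result eta ms P Ci Cj Q).

(* P0 -> Ps_0 -> Ps_1 -> ... is a sequence of edit requests and their outcomes,
   the oracle only issuing requests while the current clustering is not T. *)
Definition edit_run (eta : R) (T : {set {set X}}) (ms : seq ({set X} * {set X}))
  (P0 : {set {set X}}) (Ps : seq {set {set X}}) : Prop :=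
  forall i, (i < size Ps)%N ->
    nth P0 (P0 :: Ps) i != T /\
    edit_step eta T ms (nth P0 (P0 :: Ps) i) (nth P0 Ps i).

End ClusterDefs.

(* Main.v *)
Require Import Defs.
From mathcomp Require Import all_boot all_order all_algebra.
From mathcomp Require Import ring lra zify.
Import Order.TTheory GRing.Theory Num.Theory.
Local Open Scope ring_scope.
Set Implicit Arguments.
Unset Strict Implicit.
Unset Printing Implicit Defensive.

Section Aux.
Variables (R : realFieldType) (X : finType).
Implicit Types (P Q F : {set {set X}}) (A B C D : {set X}).

Definition part P := [/\ set0 \notin P, forall x, exists2 B, B \in P & x \in B &
  forall B B' x, B \in P -> B' \in P -> x \in B -> x \in B' -> B = B'].

Lemma partition_part P : partition P [set: X] -> part P.
Proof.
case/and3P=> /eqP cov triv n0; split => //.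
- move=> x; have : x \in cover P by rewrite cov inE.
  by case/bigcupP=> B HB xB; exists B.
- move=> B B' x HB HB' xB xB'; apply/eqP; apply/negPn/negP => ne.
  have := trivIsetP triv B B' HB HB' ne.
  by move/disjoint_setI0/setP/(_ x); rewrite !inE xB xB'.
Qed.

Lemma sc_blk P B u v : part P -> B \in P -> u \in B -> same_cluster P u v = (v \in B).
Proof.
case=> _ _ U HB uB; apply/existsP/idP.
- by case=> B' /andP[HB' /andP[uB' vB']]; rewrite (U _ _ _ HB HB' uB uB').
- by move=> vB; exists B; rewrite HB uB vB.
Qed.

Lemma sc_sym P u v : same_cluster P u v = same_cluster P v u.
Proof. by apply/existsP/existsP => -[B /and3P[? ? ?]]; exists B; apply/and3P. Qed.

Lemma part_blk P u : part P -> exists2 B, B \in P & u \in B.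
Proof. by case=> _ H _; apply: H. Qed.

Lemma part_ne0 P B : part P -> B \in P -> exists x, x \in B.
Proof.
case=> n0 _ _ HB; case: (set_0Vmem B) => [e|[x xB]]; last by exists x.
by move: n0; rewrite -e HB.
Qed.

Lemma part_uniq P B B' x : part P -> B \in P -> B' \in P -> x \in B -> x \in B' -> B = B'.
Proof. by case=> _ _ U; apply: U. Qed.

End Aux.

From mathcomp Require Import all_boot all_order all_algebra.
From mathcomp Require Import ring lra zify.
Import Order.TTheory GRing.Theory Num.Theory.
Local Open Scope ring_scope.
Set Implicit Arguments.
Unset Strict Implicit.
Unset Printing Implicit Defensive.

Section Avg.
Variables (R : realFieldType) (X : finType) (S : X -> X -> R).
Implicit Types (P F : {set {set X}}) (A B C D E Q : {set X}).

Definition hh A (c : R) (y : X) := \sum_(x in A) S x y - c * #|A|%:R.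

Lemma savg_lt A E c : A != set0 -> E != set0 ->
  (Savg S A E < c) = (\sum_(y in E) hh A c y < 0).
Proof.
move=> nA nE; rewrite /Savg ltr_pdivrMr; last first.
  by rewrite ltr0n muln_gt0 !card_gt0 nA nE.
rewrite /hh sumrB sumr_const subr_lt0; congr (_ < _).
  by rewrite exchange_big.
have -> : ((#|A| * #|E|)%:R : R) = #|A|%:R * #|E|%:R by rewrite -natrM.
by rewrite mulrA; apply: mulr_natr.
Qed.

Lemma avg_lt A D F c : part F -> A != set0 -> D != set0 ->
  (forall Q, Q \in F -> D :&: Q != set0 -> Savg S A (D :&: Q) < c) ->
  Savg S A D < c.
Proof.
move=> pF nA nD H; rewrite savg_lt //.
have E : \sum_(y in D) hh A c y = \sum_(Q in F) \sum_(y in D :&: Q) hh A c y.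
  transitivity (\sum_(y in D) \sum_(Q in F) (if y \in Q then hh A c y else 0)).
    apply: eq_bigr => y yD; have [By HBy yBy] := part_blk y pF.
    rewrite (bigD1 By) //= yBy big1 ?addr0 // => Q /andP[QF ne].
    case: ifP => // yQ; by rewrite (part_uniq pF QF HBy yQ yBy) eqxx in ne.
  rewrite exchange_big; apply: eq_bigr => Q QF; rewrite -big_mkcondr.
  by apply: eq_bigl => y; rewrite inE.
rewrite E; case: (set_0Vmem D) => [e|[y yD]]; first by rewrite e eqxx in nD.
have [By HBy yBy] := part_blk y pF.
rewrite (bigD1 By) //=.
have lt : \sum_(y in D :&: By) hh A c y < 0.
  rewrite -savg_lt //; last by apply/set0Pn; exists y; rewrite inE yD yBy.
  by apply: H => //; apply/set0Pn; exists y; rewrite inE yD yBy.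
have le : \sum_(Q in F | Q != By) \sum_(y in D :&: Q) hh A c y <= 0.
  apply: sumr_le0 => Q /andP[QF _].
  case: (set_0Vmem (D :&: Q)) => [e|[z zDQ]]; first by rewrite e big_set0.
  have ne : D :&: Q != set0 by apply/set0Pn; exists z.
  by apply: ltW; rewrite -savg_lt //; apply: H.
lra.
Qed.

Lemma savg_sym A B : (forall x y, S x y = S y x) -> Savg S A B = Savg S B A.
Proof.
move=> Ssym; rewrite /Savg exchange_big mulnC; congr (_ / _).
by apply: eq_bigr => y _; apply: eq_bigr => x _.
Qed.

End Avg.

From mathcomp Require Import all_boot all_order all_algebra.
From mathcomp Require Import ring lra zify.
Import Order.TTheory GRing.Theory Num.Theory.
Local Open Scope ring_scope.
Set Implicit Arguments.
Unset Strict Implicit.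
Unset Printing Implicit Defensive.

Section Good.
Variables (R : realFieldType) (X : finType) (S : X -> X -> R) (T : {set {set X}}).
Implicit Types (P F : {set {set X}}) (A B C D E Q M N : {set X}).

Definition Ub M := [forall B in T, (B :&: M != set0) ==> (B \subset M)].
Definition Sb M := [exists B in T, M \subset B].
Definition good M := Sb M || Ub M.

Lemma merge_good P N1 N2 : part T -> stable S T -> part P ->
  (forall M, M \in P -> good M) -> N1 \in P -> N2 \in P -> N1 != N2 ->
  (forall Q, Q \in P -> Q != N1 -> Savg S N1 Q <= Savg S N1 N2) ->
  ~~ Ub N1 -> good (N1 :|: N2).
Proof.
move=> pT Hstab pP gP HN1 HN2 neq Hmax nU.
have : Sb N1 by move: (gP _ HN1); rewrite /good (negbTE nU) orbF.
case/exists_inP => B HB sN1B.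
case/forall_inPn: nU => B' HB' /=; rewrite negb_imply => /andP[ne nsub].
have eB : B' = B.
  case/set0Pn: ne => x; rewrite inE => /andP[xB' xN1].
  exact: (part_uniq pT HB' HB xB' (subsetP sN1B _ xN1)).
subst B'.
have [x1 x1N1] := part_ne0 pP HN1.
have [x2 x2N2] := part_ne0 pP HN2.
case sN2: (N2 \subset B).
  by apply/orP; left; apply/exists_inP; exists B => //; rewrite subUset sN1B sN2.
exfalso.
have dN2B : forall y, y \in N2 -> y \notin B.
  move=> y yN2; apply/negP => yB; case/orP: (gP _ HN2).
  - case/exists_inP => B2 HB2 s2.
    have eB2 : B2 = B by apply: (part_uniq pT HB2 HB (subsetP s2 _ yN2) yB).
    by subst B2; rewrite s2 in sN2.
  - move/forall_inP/(_ _ HB).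
    rewrite (_ : B :&: N2 != set0) ?implyTb; last by apply/set0Pn; exists y; rewrite inE yB yN2.
    move=> sBN2; have := part_uniq pP HN1 HN2 x1N1 (subsetP sBN2 _ (subsetP sN1B _ x1N1)).
    by move=> e; rewrite e eqxx in neq.
have nN1 : N1 != set0 by apply/set0Pn; exists x1.
have nN2 : N2 != set0 by apply/set0Pn; exists x2.
have prN1 : N1 \proper B by rewrite properE sN1B nsub.
have lt1 : Savg S N1 N2 < Savg S N1 (B :\: N1).
  apply: (avg_lt (F:=T)) => // Q HQ ne2.
  apply: (Hstab B Q) => //; last exact: subsetIr.
  apply/eqP => eQ; subst Q; case/set0Pn: ne2 => y; rewrite inE => /andP[yN2 yB].
  by have := dN2B _ yN2; rewrite yB.
have nD : B :\: N1 != set0.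
  case/subsetPn: nsub => y yB ynN1; apply/set0Pn; exists y; by rewrite inE yB ynN1.
have lt2 : Savg S N1 (B :\: N1) < Savg S N1 (B :\: N1).
  apply: (avg_lt (F:=P)) => // Q HQ ne2.
  case/set0Pn: ne2 => y; rewrite !inE => /andP[/andP[ynN1 yB] yQ].
  have QnN1 : Q != N1 by apply/eqP => e; subst Q; rewrite yQ in ynN1.
  have dis : forall z, z \in Q -> z \notin N1.
    move=> z zQ; apply/negP => zN1; have := part_uniq pP HQ HN1 zQ zN1.
    by move=> e; rewrite e eqxx in QnN1.
  have sQ : Q \subset B :\: N1.
    case/orP: (gP _ HQ).
    - case/exists_inP => B2 HB2 s2.
      have eB2 : B2 = B by apply: (part_uniq pT HB2 HB (subsetP s2 _ yQ) yB).
      subst B2; apply/subsetP => z zQ; by rewrite inE dis // (subsetP s2).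
    - move/forall_inP/(_ _ HB).
      rewrite (_ : B :&: Q != set0) ?implyTb; last by apply/set0Pn; exists y; rewrite inE yB yQ.
      move=> sBQ; have := dis _ (subsetP sBQ _ (subsetP sN1B _ x1N1)).
      by rewrite x1N1.
  rewrite (setIidPr sQ); apply: le_lt_trans lt1; exact: Hmax.
by rewrite ltxx in lt2.
Qed.

End Good.

From mathcomp Require Import all_boot all_order all_algebra.
From mathcomp Require Import ring lra zify.
Import Order.TTheory GRing.Theory Num.Theory.
Local Open Scope ring_scope.
Set Implicit Arguments.
Unset Strict Implicit.
Unset Printing Implicit Defensive.

Section Tree.
Variables (R : realFieldType) (X : finType) (S : X -> X -> R) (T : {set {set X}}).
Variable ms : seq ({set X} * {set X}).
Hypotheses (pT : part T) (Hstab : stable S T) (Ssym : forall x y, S x y = S y x)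
  (Hms : avg_linkage_tree S ms).
Implicit Types (P F : {set {set X}}) (A B C D E Q M N : {set X}).

Lemma L_succ i : (i < size ms)%N ->
  linkage_part ms i.+1 = merge_part (linkage_part ms i) (nth (set0, set0) ms i).
Proof. by move=> Hi; rewrite /linkage_part (take_nth (set0, set0) Hi) foldl_rcons. Qed.

Lemma good_single x : good T [set x].
Proof.
have [B HB xB] := part_blk x pT.
by apply/orP; left; apply/exists_inP; exists B => //; rewrite sub1set.
Qed.

Lemma part_singletons : part (singletons X).
Proof.
split.
- apply/negP => /imsetP [x _ e].
  by move: (set11 x); rewrite -e inE.
- by move=> x; exists [set x]; [apply: imset_f | rewrite set11].
- move=> B B' x /imsetP[y _ ->] /imsetP[z _ ->]; rewrite !inE => /eqP -> /eqP ->.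
  done.
Qed.

Definition Inv i := part (linkage_part ms i) /\
  (forall B, B \in linkage_part ms i -> good T B /\ B \in tree_nodes ms).

Lemma inv_L i : (i <= size ms)%N -> Inv i.
Proof.
elim: i => [_|i IH Hi].
  rewrite /Inv (_ : linkage_part ms 0 = singletons X); last by rewrite /linkage_part take0.
  split; first exact: part_singletons.
  move=> B HB; split; last by rewrite inE HB.
  by case/imsetP: HB => x _ ->; exact: good_single.
have Hi' : (i < size ms)%N by [].
have [pP gP] := IH (ltnW Hi).
case: Hms => Hstep _; have [H1 H2 H12 Hmax] := Hstep i Hi'.
rewrite /Inv L_succ //.
set P := linkage_part ms i in pP gP H1 H2 H12 Hmax *.
set p := nth (set0, set0) ms i in H1 H2 H12 Hmax *.
have [x1 x1p1] := part_ne0 pP H1.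
have inQ : forall B, B \in merge_part P p =
    (B == p.1 :|: p.2) || [&& B != p.2, B != p.1 & B \in P].
  by move=> B; rewrite /merge_part !inE.
have blk : forall x, x \in p.1 :|: p.2 -> forall B, B \in P -> x \in B -> B = p.1 \/ B = p.2.
  move=> x; rewrite inE => /orP[xp|xp] B HB xB.
  - by left; apply: (part_uniq pP HB H1 xB xp).
  - by right; apply: (part_uniq pP HB H2 xB xp).
split.
- split.
  + rewrite inQ negb_or; apply/andP; split.
      by apply/eqP => e; move: (subsetP (subsetUl p.1 p.2) _ x1p1); rewrite -e inE.
    case: pP => n0 _ _; by rewrite (negbTE n0) !andbF.
  + move=> x; have [Bx HBx xBx] := part_blk x pP.
    case: (boolP ((Bx == p.1) || (Bx == p.2))) => [/orP[]/eqP e|].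
    * by exists (p.1 :|: p.2); [rewrite inQ eqxx | rewrite inE -e xBx].
    * by exists (p.1 :|: p.2); [rewrite inQ eqxx | rewrite inE -e xBx orbT].
    * rewrite negb_or => /andP[n1 n2]; exists Bx => //; by rewrite inQ n1 n2 HBx !orbT.
  + move=> B B' x; rewrite !inQ.
    case/orP=> [/eqP eB| /and3P[n2 n1 HB]]; case/orP=> [/eqP eB'| /and3P[n2' n1' HB']].
    * by rewrite eB eB'.
    * move=> xB xB'; rewrite eB in xB; case: (blk x xB B' HB' xB') => e.
      - by rewrite e eqxx in n1'.
      - by rewrite e eqxx in n2'.
    * move=> xB xB'; rewrite eB' in xB'; case: (blk x xB' B HB xB) => e.
      - by rewrite e eqxx in n1.
      - by rewrite e eqxx in n2.
    * exact: part_uniq pP HB HB'.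
- move=> B; rewrite inQ => /orP[/eqP ->|/and3P[_ _ HB]]; last exact: gP.
  split; last first.
    rewrite inE; apply/orP; right; apply/imsetP; exists p => //.
    exact: mem_nth.
  have gp : forall M, M \in P -> good T M by move=> M /gP[].
  case U1: (Ub T p.1); case U2: (Ub T p.2).
  + apply/orP; right; apply/forall_inP => B0 HB0; apply/implyP.
    case/set0Pn => y; rewrite !inE => /andP[yB /orP[yp|yp]].
    * move/forall_inP/(_ _ HB0): U1; rewrite (_ : B0 :&: p.1 != set0); last first.
        by apply/set0Pn; exists y; rewrite inE yB yp.
      by move=> /= s; apply: subset_trans s (subsetUl _ _).
    * move/forall_inP/(_ _ HB0): U2; rewrite (_ : B0 :&: p.2 != set0); last first.
        by apply/set0Pn; exists y; rewrite inE yB yp.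
      by move=> /= s; apply: subset_trans s (subsetUr _ _).
  + rewrite setUC; apply: (merge_good (S:=S) pT Hstab pP gp H2 H1) => //.
    * by rewrite eq_sym.
    * move=> Q HQ nQ; rewrite (savg_sym p.2 p.1 Ssym); apply: Hmax => //.
      by rewrite eq_sym.
    * by rewrite U2.
  + apply: (merge_good (S:=S) pT Hstab pP gp H1 H2) => //.
    * move=> Q HQ nQ; apply: Hmax => //; by rewrite eq_sym.
    * by rewrite U1.
  + apply: (merge_good (S:=S) pT Hstab pP gp H1 H2) => //.
    * move=> Q HQ nQ; apply: Hmax => //; by rewrite eq_sym.
    * by rewrite U1.
Qed.

Lemma ms_facts p : p \in ms ->
  [/\ p.1 \in tree_nodes ms, p.2 \in tree_nodes ms, good T p.1 & good T p.2] /\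
  [/\ p.1 != set0, p.2 != set0 & forall x, x \in p.1 -> x \in p.2 -> False].
Proof.
move=> pin; have Hi : (index p ms < size ms)%N by rewrite index_mem.
have e := nth_index (set0, set0) pin.
case: Hms => Hstep _; have [H1 H2 H12 _] := Hstep _ Hi.
rewrite e in H1 H2 H12.
have [pP gP] := inv_L (ltnW Hi).
have [g1 t1] := gP _ H1; have [g2 t2] := gP _ H2.
have [x1 x1p] := part_ne0 pP H1; have [x2 x2p] := part_ne0 pP H2.
split; split => //.
- by apply/set0Pn; exists x1.
- by apply/set0Pn; exists x2.
- move=> x xp1 xp2; have := part_uniq pP H1 H2 xp1 xp2.
  by move=> e'; rewrite e' eqxx in H12.
Qed.

Lemma tree_good N : N \in tree_nodes ms -> good T N.
Proof.
rewrite inE => /orP[/imsetP[x _ ->]|/imsetP[p pin ->]]; first exact: good_single.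
have Hi : (index p ms < size ms)%N by rewrite index_mem.
have e := nth_index (set0, set0) pin.
have [_ gP] := inv_L Hi.
rewrite L_succ // e in gP.
have := gP (p.1 :|: p.2); rewrite /merge_part setU11 => -[] //.
Qed.

End Tree.

Lemma depth_lt (X : finType) (ms : seq ({set X} * {set X})) (M N : {set X}) :
  N \in tree_nodes ms -> M \proper N -> (depth ms N < depth ms M)%N.
Proof.
move=> HN pMN; rewrite /depth; apply: proper_card; rewrite properE; apply/andP; split.
- apply/subsetP => K; rewrite !inE => /andP[Kt pNK]; rewrite Kt /=.
  exact: proper_trans pMN pNK.
- apply/subsetPn; exists N; first by rewrite inE HN pMN.
  by rewrite inE properxx andbF.
Qed.

From mathcomp Require Import all_boot all_order all_algebra.
From mathcomp Require Import ring lra zify.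
Import Order.TTheory GRing.Theory Num.Theory.
Local Open Scope ring_scope.
Set Implicit Arguments.
Unset Strict Implicit.
Unset Printing Implicit Defensive.

Section Gen.
Variables (X : finType).
Implicit Types (P Q F Rm Nw : {set {set X}}) (A B C D E M N : {set X}).

Lemma part_repl P Q Rm Nw : part P -> (forall B, B \in Rm -> B \in P) ->
  (forall B, (B \in Q) = (B \in Nw) || (B \in P) && (B \notin Rm)) ->
  set0 \notin Nw ->
  (forall B B' x, B \in Nw -> B' \in Nw -> x \in B -> x \in B' -> B = B') ->
  (forall x B, B \in Rm -> x \in B -> exists2 B', B' \in Nw & x \in B') ->
  (forall x B, B \in Nw -> x \in B -> exists2 B', B' \in Rm & x \in B') ->
  part Q.
Proof.
move=> pP sRm eQ n0 uN covN covR; split.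
- by rewrite eQ (negbTE n0) /=; case: pP => n0P _ _; rewrite (negbTE n0P).
- move=> x; have [Bx HBx xBx] := part_blk x pP.
  case: (boolP (Bx \in Rm)) => [HR|HR].
    by have [B' HB' xB'] := covN _ _ HR xBx; exists B' => //; rewrite eQ HB'.
  by exists Bx => //; rewrite eQ HBx HR orbT.
- move=> B B' x; rewrite !eQ.
  have key : forall B B', B \in Nw -> B' \in P -> B' \notin Rm -> x \in B -> x \in B' -> False.
    move=> B1 B2 H1 H2 H2' xB1 xB2; have [B3 HB3 xB3] := covR _ _ H1 xB1.
    have e := part_uniq pP (sRm _ HB3) H2 xB3 xB2.
    by rewrite -e HB3 in H2'.
  case/orP => [HB|/andP[HB HB2]]; case/orP => [HB'|/andP[HB' HB2']] xB xB'.
  + exact: uN HB HB' xB xB'.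
  + by case: (key _ _ HB HB' HB2' xB xB').
  + by case: (key _ _ HB' HB HB2 xB' xB).
  + exact: part_uniq pP HB HB' xB xB'.
Qed.

Lemma sc_keep P Q u v : part P -> part Q ->
  (forall B, B \in P -> u \in B -> B \in Q) -> same_cluster Q u v = same_cluster P u v.
Proof.
move=> pP pQ H; have [Bu HBu uBu] := part_blk u pP.
by rewrite (sc_blk _ pP HBu uBu) (sc_blk _ pQ (H _ HBu uBu) uBu).
Qed.

End Gen.

From mathcomp Require Import all_boot all_order all_algebra.
From mathcomp Require Import ring lra zify.
Import Order.TTheory GRing.Theory Num.Theory.
Local Open Scope ring_scope.
Set Implicit Arguments.
Unset Strict Implicit.
Unset Printing Implicit Defensive.

Lemma split_cw (uc u1 u2 vc v1 v2 p q t : bool) :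
 (uc ==> (p == vc)) -> (vc ==> (p == uc)) -> (uc && u1 ==> (q == vc && v1)) ->
 (uc && u2 ==> (q == vc && v2)) -> (vc && v1 ==> (q == uc && u1)) ->
 (vc && v2 ==> (q == uc && u2)) -> (~~ uc ==> (q == p)) -> (~~ vc ==> (q == p)) ->
 (uc ==> u1 || u2) -> (vc ==> v1 || v2) -> ~~ (u1 && u2) -> ~~ (v1 && v2) ->
 ((u1 && v2) || (u2 && v1) ==> ~~ t) -> (q != t) -> (p != t).
Proof. by case: uc u1 u2 vc v1 v2 p q t => [] [] [] [] [] [] [] [] []. Qed.


Section Steps.
Variables (X : finType) (T : {set {set X}}) (ms : seq ({set X} * {set X})).
Hypothesis pT : part T.
Hypothesis TF1 : forall p, p \in ms ->
  [/\ p.1 \in tree_nodes ms, p.2 \in tree_nodes ms, good T p.1 & good T p.2] /\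
  [/\ p.1 != set0, p.2 != set0 & forall x, x \in p.1 -> x \in p.2 -> False].
Hypothesis TF2 : forall N, N \in tree_nodes ms -> good T N.
Implicit Types (P Q F : {set {set X}}) (A B C D E M N : {set X}).

Lemma good_sub M B0 u w : good T M -> B0 \in T -> u \in M -> u \in B0 -> w \in B0 ->
  w \notin M -> M \subset B0.
Proof.
move=> gM HB0 uM uB0 wB0 wM; case/orP: gM.
- case/exists_inP => B1 HB1 s1.
  by have e := part_uniq pT HB1 HB0 (subsetP s1 _ uM) uB0; rewrite -e.
- move/forall_inP/(_ _ HB0); rewrite (_ : B0 :&: M != set0) ?implyTb; last first.
    by apply/set0Pn; exists u; rewrite inE uB0 uM.
  by move=> s; rewrite (subsetP s _ wB0) in wM.
Qed.

Lemma split_step P C Q : part P -> split_allowed T P C -> split_result ms P C Q ->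
  part Q /\ (delta_cc Q T < delta_cc P T)%N.
Proof.
move=> pP [CP [A [B [HA HB nAB nCA nCB]]]] [N [N1 [N2 [HN sCN Hdeep [pin eN] eQ]]]].
move: (TF1 pin) => /= [[t1 t2 g1 g2] [n1 n2 dis]].
have xN : forall x, x \in C -> (x \in N1) || (x \in N2).
  by move=> x xC; have := subsetP sCN _ xC; rewrite eN inE.
have nCN1 : C :&: N1 != set0.
  apply/negP => /eqP e.
  have sub : C \subset N2.
    apply/subsetP => x xC; case/orP: (xN _ xC) => // xN1.
    by move/setP/(_ x): e; rewrite !inE xC xN1.
  have pr : N2 \proper N.
    rewrite properE eN subsetUr /=; case/set0Pn: n1 => x1 x1N1.
    apply/subsetPn; exists x1; first by rewrite inE x1N1.
    by apply/negP => h; exact: dis _ x1N1 h.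
  by have := Hdeep _ t2 sub; rewrite leqNgt (depth_lt HN pr).
have nCN2 : C :&: N2 != set0.
  apply/negP => /eqP e.
  have sub : C \subset N1.
    apply/subsetP => x xC; case/orP: (xN _ xC) => // xN2.
    by move/setP/(_ x): e; rewrite !inE xC xN2.
  have pr : N1 \proper N.
    rewrite properE eN subsetUl /=; case/set0Pn: n2 => x2 x2N2.
    apply/subsetPn; exists x2; first by rewrite inE x2N2 orbT.
    by apply/negP => h; exact: dis _ h x2N2.
  by have := Hdeep _ t1 sub; rewrite leqNgt (depth_lt HN pr).
have scT : forall u v, u \in N1 -> v \in N2 -> ~~ same_cluster T u v.
  move=> u v uN1 vN2; apply/negP => /existsP[B0 /and3P[HB0 uB0 vB0]].
  have s1 := good_sub g1 HB0 uN1 uB0 vB0 (introN idP (fun h => dis _ h vN2)).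
  have s2 := good_sub g2 HB0 vN2 vB0 uB0 (introN idP (fun h => dis _ uN1 h)).
  have sC : C \subset B0.
    by apply/subsetP => x xC; case/orP: (xN _ xC) => h; [apply: (subsetP s1) | apply: (subsetP s2)].
  case/set0Pn: nCA => a; rewrite inE => /andP[aC aA].
  case/set0Pn: nCB => b; rewrite inE => /andP[bC bB].
  have eA := part_uniq pT HA HB0 aA (subsetP sC _ aC).
  have eB := part_uniq pT HB HB0 bB (subsetP sC _ bC).
  by rewrite eA eB eqxx in nAB.
have inQ : forall B0, (B0 \in Q) =
    (B0 \in [set C :&: N1; C :&: N2]) || (B0 \in P) && (B0 \notin [set C]).
  by move=> B0; rewrite eQ !inE orbA andbC.
have pQ : part Q.
  apply: (part_repl pP _ inQ).
  - by move=> B0; rewrite inE => /eqP ->.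
  - by rewrite !inE !(eq_sym set0) negb_or nCN1 nCN2.
  - move=> B1 B2 x; rewrite !inE => /orP[]/eqP-> /orP[]/eqP-> //;
      rewrite !inE => /andP[_ h1] /andP[_ h2]; [case: (dis _ h1 h2) | case: (dis _ h2 h1)].
  - move=> x B0; rewrite inE => /eqP -> xC.
    case/orP: (xN _ xC) => h; [exists (C :&: N1) | exists (C :&: N2)];
      by rewrite !inE ?eqxx ?orbT ?xC ?h.
  - move=> x B0; rewrite !inE => /orP[]/eqP -> ; rewrite inE => /andP[xC _];
      by exists C; rewrite ?inE.
have Q1 : C :&: N1 \in Q by rewrite inQ !inE eqxx.
have Q2 : C :&: N2 \in Q by rewrite inQ !inE eqxx orbT.
have hP1 : forall u v, u \in C -> same_cluster P u v = (v \in C).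
  by move=> u v uC; rewrite (sc_blk _ pP CP uC).
have hQ1 : forall u v, u \in C :&: N1 -> same_cluster Q u v = (v \in C :&: N1).
  by move=> u v h; rewrite (sc_blk _ pQ Q1 h).
have hQ2 : forall u v, u \in C :&: N2 -> same_cluster Q u v = (v \in C :&: N2).
  by move=> u v h; rewrite (sc_blk _ pQ Q2 h).
have hQ0 : forall u v, u \notin C -> same_cluster Q u v = same_cluster P u v.
  move=> u v uC; apply: sc_keep => // B0 HB0 uB0; rewrite inQ HB0 !inE.
  by apply/orP; right; apply/eqP => e; rewrite -e uB0 in uC.
split => //; rewrite /delta_cc; apply: proper_card; rewrite properE; apply/andP; split.
- apply/subsetP => -[u v]; rewrite !inE /= => h.
  apply: (split_cw (uc:=u \in C) (u1:=u \in N1) (u2:=u \in N2) (vc:=v \in C)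
     (v1:=v \in N1) (v2:=v \in N2) _ _ _ _ _ _ _ _ _ _ _ _ _ h).
  + by apply/implyP => uC; rewrite hP1.
  + by apply/implyP => vC; rewrite sc_sym hP1.
  + by apply/implyP => /andP[uC uN1]; rewrite hQ1 ?inE ?uC.
  + by apply/implyP => /andP[uC uN2]; rewrite hQ2 ?inE ?uC.
  + by apply/implyP => /andP[vC vN1]; rewrite sc_sym hQ1 ?inE ?vC.
  + by apply/implyP => /andP[vC vN2]; rewrite sc_sym hQ2 ?inE ?vC.
  + by apply/implyP => uC; rewrite hQ0.
  + by apply/implyP => vC; rewrite sc_sym hQ0 // sc_sym.
  + by apply/implyP; exact: xN.
  + by apply/implyP; exact: xN.
  + by apply/negP => /andP[a b]; exact: dis _ a b.
  + by apply/negP => /andP[a b]; exact: dis _ a b.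
  + apply/implyP => /orP[/andP[a b]|/andP[a b]]; first exact: scT.
    by rewrite sc_sym; exact: scT.
- case/set0Pn: nCN1 => u uCN1; case/set0Pn: nCN2 => v vCN2.
  apply/subsetPn; exists (u, v); rewrite !inE /=.
  + move: (uCN1) (vCN2); rewrite !inE => /andP[uC uN1] /andP[vC vN2].
    by rewrite hP1 // vC (negbTE (scT _ _ uN1 vN2)).
  + move: (uCN1) (vCN2); rewrite !inE => /andP[uC uN1] /andP[vC vN2].
    rewrite hQ1 // (negbTE (scT _ _ uN1 vN2)) inE vC /=.
    by apply/negP; rewrite eqbF_neg negbK => h; exact: dis _ h vN2.
Qed.

End Steps.

From mathcomp Require Import all_boot all_order all_algebra.
From mathcomp Require Import ring lra zify.
Import Order.TTheory GRing.Theory Num.Theory.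
Local Open Scope ring_scope.
Set Implicit Arguments.
Unset Strict Implicit.
Unset Printing Implicit Defensive.

Lemma merge_cw (ui uj un ul vi vj vn vl p q t : bool) :
 (ui ==> (p == vi)) -> (uj ==> (p == vj)) -> (vi ==> (p == ui)) -> (vj ==> (p == uj)) ->
 ((ui || un && uj) ==> (q == (vi || vn && vj))) -> ((~~ un && uj) ==> (q == (~~ vn && vj))) ->
 ((vi || vn && vj) ==> (q == (ui || un && uj))) -> ((~~ vn && vj) ==> (q == (~~ un && uj))) ->
 (~~ ui ==> ~~ uj ==> (q == p)) -> (~~ vi ==> ~~ vj ==> (q == p)) ->
 ~~ (ui && uj) -> ~~ (vi && vj) -> (un && uj ==> ul) -> (vn && vj ==> vl) ->
 (ul ==> (t == vl)) -> (vl ==> (t == ul)) ->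
 ((q != t) ==> ((p != t) || (((un && uj) && ((~~ vl && vi) || (~~ vn && vj))) ||
                              (((~~ ul && ui) || (~~ un && uj)) && (vn && vj)))))
 && ((((un && uj) && (vi && vl)) || ((ui && ul) && (vn && vj))) ==> ((p != t) && (q == t))).
Proof. by case: ui uj un ul vi vj vn vl p q t => [] [] [] [] [] [] [] [] [] [] []. Qed.

Lemma ineq_lem (R : realFieldType) (eta a b w m x1 x2 : R) : 2/3 < eta -> eta * a <= w -> eta * b <= m ->
  w + x1 = a -> m + x2 = b -> b <= a -> 1 <= a -> 0 <= x1 -> 0 <= x2 -> x1 + x2 < w.
Proof.
move=> he ba bb e1 e2 l a1 d1 d2.
have h0 : (eta - 1) * a <= 0 by rewrite mulrBl mul1r; lra.
have h1 : eta <= 1.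
  rewrite pmulr_lle0 in h0; [lra | lra].
have h2 : 0 <= (1 - eta) * (a - b) by apply: mulr_ge0; lra.
have h3 : 0 < (3 * eta - 2) * a by apply: mulr_gt0; lra.
lra.
Qed.

Lemma fin_count (q p g pd h u i h' k1 k2 : nat) : (g + pd = p)%N -> (q <= u)%N ->
  (u + i = pd + h)%N -> (h + h' = k1 + k1)%N -> (g = k2 + k2)%N -> (k1 < k2)%N -> (q < p)%N.
Proof. lia. Qed.

Section MStep.
Variables (R : realFieldType) (X : finType) (T : {set {set X}}).
Hypothesis pT : part T.
Implicit Types (P Q F : {set {set X}}) (A B C D E M N : {set X}).

Lemma merge_step1 (eta : R) P Ci Cj N Cl Q : part P -> Ci \in P -> Cj \in P -> Ci != Cj ->
  Cl \in T -> 2 / 3 < eta -> eta_big eta Cl Ci -> eta_big eta N Cj -> N \subset Cl ->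
  (#|Cj| <= #|Ci|)%N ->
  Q = ([set Ci :|: N :&: Cj; Cj :\: N] :|: ((P :\ Ci) :\ Cj)) :\ set0 ->
  part Q /\ (delta_cc Q T < delta_cc P T)%N.
Proof.
move=> pP HCi HCj nij HCl heta bCi bNj sNCl leji eQ.
have dij : forall x, x \in Ci -> x \in Cj -> False.
  by move=> x a b; have e := part_uniq pP HCi HCj a b; rewrite e eqxx in nij.
have [xi xiCi] := part_ne0 pP HCi.
have [xj xjCj] := part_ne0 pP HCj.
have n0P : set0 \notin P by case: pP.
set X1 := Ci :|: N :&: Cj; set X2 := Cj :\: N.
have inQ : forall B0, (B0 \in Q) =
    (B0 \in [set X1; X2] :\ set0) || (B0 \in P) && (B0 \notin [set Ci; Cj]).
  move=> B0; rewrite eQ !inE; case: (B0 =P set0) => [->|_] /=.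
    by rewrite (negbTE n0P).
  by case: (B0 == X1); case: (B0 == X2); case: (B0 == Ci); case: (B0 == Cj); case: (B0 \in P).
have pQ : part Q.
  apply: (part_repl pP _ inQ).
  - by move=> B0; rewrite !inE => /orP[]/eqP->.
  - by rewrite !inE eqxx.
  - move=> B1 B2 x; rewrite !inE => /andP[_ /orP[]/eqP->] /andP[_ /orP[]/eqP->] //;
      rewrite !inE.
    + move=> /orP[a|/andP[a b]] /andP[c d]; [case: (dij _ a d) | by rewrite a in c].
    + move=> /andP[c d] /orP[a|/andP[a b]]; [case: (dij _ a d) | by rewrite a in c].
  - move=> x B0; rewrite !inE => /orP[]/eqP -> xB.
    + by exists X1; rewrite !inE ?xB // eqxx andbT; apply/set0Pn; exists x; rewrite inE xB.
    + case xN: (x \in N).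
      * exists X1; rewrite !inE ?xB ?xN ?orbT // eqxx andbT.
        by apply/set0Pn; exists x; rewrite !inE xB xN orbT.
      * exists X2; rewrite !inE ?xB ?xN // eqxx orbT andbT.
        by apply/set0Pn; exists x; rewrite !inE xB xN.
  - move=> x B0; rewrite !inE => /andP[_ /orP[]/eqP ->]; rewrite !inE.
    + by move=> /orP[a|/andP[_ b]]; [exists Ci | exists Cj]; rewrite ?inE ?eqxx ?orbT.
    + by move=> /andP[_ b]; exists Cj; rewrite ?inE ?eqxx ?orbT.
have hPi : forall u v, u \in Ci -> same_cluster P u v = (v \in Ci).
  by move=> u v h; rewrite (sc_blk _ pP HCi h).
have hPj : forall u v, u \in Cj -> same_cluster P u v = (v \in Cj).
  by move=> u v h; rewrite (sc_blk _ pP HCj h).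
have hQ1 : forall u v, u \in X1 -> same_cluster Q u v = (v \in X1).
  move=> u v h; apply: (sc_blk _ pQ _ h).
  by rewrite inQ !inE eqxx andbT; apply/orP; left; apply/set0Pn; exists u.
have hQ2 : forall u v, u \in X2 -> same_cluster Q u v = (v \in X2).
  move=> u v h; apply: (sc_blk _ pQ _ h).
  by rewrite inQ !inE eqxx orbT andbT; apply/orP; left; apply/set0Pn; exists u.
have hQ0 : forall u v, u \notin Ci -> u \notin Cj -> same_cluster Q u v = same_cluster P u v.
  move=> u v ui uj; apply: sc_keep => // B0 HB0 uB0; rewrite inQ HB0 !inE.
  apply/orP; right; apply/norP; split; apply/eqP => e; subst B0.
  - by rewrite uB0 in ui.
  - by rewrite uB0 in uj.
have hT : forall u v, u \in Cl -> same_cluster T u v = (v \in Cl).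
  by move=> u v h; rewrite (sc_blk _ pT HCl h).
set M := N :&: Cj; set W := Ci :&: Cl; set V := (Ci :\: Cl) :|: (Cj :\: N).
have cw : forall u v,
  ((same_cluster Q u v != same_cluster T u v) ==>
     ((same_cluster P u v != same_cluster T u v) ||
      (((u, v) \in setX M V) || ((u, v) \in setX V M))))
  && ((((u, v) \in setX M W) || ((u, v) \in setX W M)) ==>
     ((same_cluster P u v != same_cluster T u v) &&
      (same_cluster Q u v == same_cluster T u v))).
  move=> u v; rewrite !in_setX !inE.
  apply: merge_cw.
  + by apply/implyP => h; rewrite hPi.
  + by apply/implyP => h; rewrite hPj.
  + by apply/implyP => h; rewrite sc_sym hPi.
  + by apply/implyP => h; rewrite sc_sym hPj.
  + by apply/implyP => h; rewrite hQ1 ?inE.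
  + by apply/implyP => h; rewrite hQ2 ?inE.
  + by apply/implyP => h; rewrite sc_sym hQ1 ?inE.
  + by apply/implyP => h; rewrite sc_sym hQ2 ?inE.
  + by apply/implyP => a; apply/implyP => b; rewrite hQ0.
  + by apply/implyP => a; apply/implyP => b; rewrite sc_sym hQ0 // sc_sym.
  + by apply/negP => /andP[a b]; apply: dij a b.
  + by apply/negP => /andP[a b]; apply: dij a b.
  + by apply/implyP => /andP[a b]; apply: (subsetP sNCl).
  + by apply/implyP => /andP[a b]; apply: (subsetP sNCl).
  + by apply/implyP => h; rewrite hT.
  + by apply/implyP => h; rewrite sc_sym hT.
split => //; rewrite /delta_cc.
set bP := [set uv : X * X | same_cluster P uv.1 uv.2 != same_cluster T uv.1 uv.2].
set bQ := [set uv : X * X | same_cluster Q uv.1 uv.2 != same_cluster T uv.1 uv.2].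
have GP : (setX M W :|: setX W M) \subset bP.
  apply/subsetP => -[u v]; rewrite in_setU => h; have /andP[_ c] := cw u v.
  by have /andP[d _] := implyP c h; rewrite inE /= d.
have sQ : bQ \subset (bP :\: (setX M W :|: setX W M)) :|: (setX M V :|: setX V M).
  apply/subsetP => -[u v]; rewrite inE /= => h; have /andP[a c] := cw u v.
  case/orP: (implyP a h) => [d|e]; last first.
    by apply/setUP; right; apply/setUP; case/orP: e; [left|right].
  rewrite in_setU in_setD; apply/orP; left; apply/andP; split; last by rewrite inE /= d.
  apply/negP; rewrite in_setU => g; have /andP[_ e] := implyP c g.
  by rewrite e in h.
have cG : #|setX M W :|: setX W M| = (#|M| * #|W| + #|W| * #|M|)%N.
  have e := cardsUI (setX M W) (setX W M).
  have EI : setX M W :&: setX W M = set0.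
    apply/setP => -[u v]; rewrite in_setI !in_setX in_set0.
    apply/negP => /andP[/andP[a _] /andP[b _]]; move: a b; rewrite !inE.
    by move=> /andP[_ a] /andP[b _]; apply: dij b a.
  by rewrite EI cards0 addn0 !cardsX in e.
have cH := cardsUI (setX M V) (setX V M); rewrite !cardsX in cH.
have cV : (#|V| <= #|Ci :\: Cl| + #|Cj :\: N|)%N.
  by rewrite /V -(cardsUI (Ci :\: Cl) (Cj :\: N)) leq_addr.
have eta0 : 0 < eta by apply: lt_trans heta; rewrite divr_gt0 ?ltr0n.
have nM : (0 < #|M|)%N.
  have h : (0 : R) < #|N :&: Cj|%:R.
    apply: lt_le_trans bNj; apply: mulr_gt0 => //.
    by rewrite ltr0n card_gt0; apply/set0Pn; exists xj.
  by rewrite ltr0n in h.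
have VW : (#|V| < #|W|)%N.
  suff : (#|Ci :\: Cl| + #|Cj :\: N| < #|W|)%N by apply: leq_ltn_trans.
  have e1 := cardsID Cl Ci; have e2 := cardsID N Cj.
  rewrite /eta_big setIC in bCi; rewrite /eta_big setIC in bNj.
  rewrite /W -(ltr_nat R) natrD.
  have e1' : (#|Ci :&: Cl|%:R + #|Ci :\: Cl|%:R = #|Ci|%:R :> R) by rewrite -natrD e1.
  have e2' : (#|Cj :&: N|%:R + #|Cj :\: N|%:R = #|Cj|%:R :> R) by rewrite -natrD e2.
  have l' : (#|Cj|%:R <= #|Ci|%:R :> R) by rewrite ler_nat.
  have a1 : (1 <= #|Ci|%:R :> R) by rewrite ler1n card_gt0; apply/set0Pn; exists xi.
  have d1 : (0 <= #|Ci :\: Cl|%:R :> R) by [].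
  have d2 : (0 <= #|Cj :\: N|%:R :> R) by [].
  exact: (ineq_lem heta bCi bNj e1' e2' l' a1 d1 d2).
have cB := cardsID (setX M W :|: setX W M) bP; rewrite (setIidPr GP) in cB.
have s1 := subset_leq_card sQ.
have cU := cardsUI (bP :\: (setX M W :|: setX W M)) (setX M V :|: setX V M).
have p1 : (#|M| * #|V| < #|M| * #|W|)%N by rewrite ltn_pmul2l.
rewrite (mulnC #|W|) in cG; rewrite (mulnC #|V|) in cH.
exact: (fin_count cB s1 cU cH cG p1).
Qed.

End MStep.

From mathcomp Require Import all_boot all_order all_algebra.
From mathcomp Require Import ring lra zify.
Import Order.TTheory GRing.Theory Num.Theory.
Local Open Scope ring_scope.
Set Implicit Arguments.
Unset Strict Implicit.
Unset Printing Implicit Defensive.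

Lemma half_ineq (R : realFieldType) (eta c a b : R) : 1 / 2 < eta -> 1 <= c ->
  eta * c <= a -> eta * c <= b -> a + b <= c -> False.
Proof.
move=> he c1 ha hb hab.
have : 0 < (2 * eta - 1) * c by apply: mulr_gt0; lra.
lra.
Qed.

Lemma big_meet (R : realFieldType) (X : finType) (eta : R) (A B C : {set X}) :
  1 / 2 < eta -> C != set0 -> eta_big eta A C -> eta_big eta B C ->
  exists x, [&& x \in A, x \in B & x \in C].
Proof.
move=> he nC bA bB.
case: (set_0Vmem (A :&: B :&: C)) => [e|[x]]; last by rewrite !inE => /andP[/andP[? ?] ?]; exists x; apply/and3P.
exfalso.
have I0 : (A :&: C) :&: (B :&: C) = set0.
  apply/setP => y; move/setP/(_ y): e; rewrite !inE.
  by case: (y \in A); case: (y \in B); case: (y \in C).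
have e1 := cardsUI (A :&: C) (B :&: C); rewrite I0 cards0 addn0 in e1.
have sU : (A :&: C) :|: (B :&: C) \subset C by rewrite subUset !subsetIr.
have l := subset_leq_card sU; rewrite e1 in l.
have c1 : (1 <= #|C|%:R :> R) by rewrite ler1n card_gt0.
have l' : (#|A :&: C|%:R + #|B :&: C|%:R <= #|C|%:R :> R) by rewrite -natrD ler_nat.
exact: (half_ineq he c1 bA bB l').
Qed.

Section Final.
Variables (R : realFieldType) (X : finType) (T : {set {set X}}) (ms : seq ({set X} * {set X})).
Hypothesis pT : part T.
Hypothesis TF1 : forall p, p \in ms ->
  [/\ p.1 \in tree_nodes ms, p.2 \in tree_nodes ms, good T p.1 & good T p.2] /\
  [/\ p.1 != set0, p.2 != set0 & forall x, x \in p.1 -> x \in p.2 -> False].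
Hypothesis TF2 : forall N, N \in tree_nodes ms -> good T N.
Implicit Types (P Q F : {set {set X}}) (A B C D E M N : {set X}).

Lemma cl_child N1 N2 Cl x y : good T N1 -> good T N2 ->
  (forall z, z \in N1 -> z \in N2 -> False) -> Cl \in T -> Cl \subset N1 :|: N2 ->
  y \in N1 :|: N2 -> y \notin Cl -> x \in Cl -> x \in N1 -> Cl \subset N1.
Proof.
move=> g1 g2 dis HCl sCl yN yCl xCl xN1; case/orP: g1.
- case/exists_inP => B HB sN1B.
  have e := part_uniq pT HB HCl (subsetP sN1B _ xN1) xCl; subst B.
  have yN2 : y \in N2.
    move: yN; rewrite inE => /orP[h|//]; by rewrite (subsetP sN1B _ h) in yCl.
  apply/subsetP => w wCl; move: (subsetP sCl _ wCl); rewrite inE => /orP[//|wN2].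
  have xN2 : x \notin N2 by apply/negP => h; exact: dis _ xN1 h.
  have s2 := good_sub pT g2 HCl wN2 wCl xCl xN2.
  by rewrite (subsetP s2 _ yN2) in yCl.
- move/forall_inP/(_ _ HCl); rewrite (_ : Cl :&: N1 != set0) ?implyTb //.
  by apply/set0Pn; exists x; rewrite inE xCl xN1.
Qed.

Lemma N_sub_Cl (eta : R) Ci Cj N Cl : N \in tree_nodes ms ->
  (forall M, M \in tree_nodes ms -> eta_big eta M Ci -> eta_big eta M Cj ->
     (depth ms M <= depth ms N)%N) ->
  eta_big eta N Ci -> eta_big eta Cl Ci -> eta_big eta Cl Cj -> Cl \in T ->
  Ci != set0 -> 1 / 2 < eta -> N \subset Cl.
Proof.
move=> HN Hdeep bNi bCli bClj HCl nCi he.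
have [x /and3P[xN xCl xCi]] := big_meet he nCi bNi bCli.
case/orP: (TF2 HN).
- case/exists_inP => B HB sNB.
  by have e := part_uniq pT HB HCl (subsetP sNB _ xN) xCl; rewrite -e.
move/forall_inP/(_ _ HCl); rewrite (_ : Cl :&: N != set0) ?implyTb; last first.
  by apply/set0Pn; exists x; rewrite inE xCl xN.
move=> sClN; apply/subsetP => y yN; apply/negPn/negP => yCl.
have fin : forall M M', M \in tree_nodes ms -> M' != set0 ->
    (forall z, z \in M -> z \in M' -> False) -> N = M :|: M' -> Cl \subset M -> False.
  move=> M M' tM nM' dis eN sClM.
  have bMi : eta_big eta M Ci.
    apply: (le_trans bCli); rewrite ler_nat; apply: subset_leq_card; exact: setSI.
  have bMj : eta_big eta M Cj.
    apply: (le_trans bClj); rewrite ler_nat; apply: subset_leq_card; exact: setSI.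
  have pr : M \proper N.
    rewrite properE eN subsetUl /=; case/set0Pn: nM' => z zM'.
    apply/subsetPn; exists z; first by rewrite inE zM' orbT.
    by apply/negP => h; exact: dis _ h zM'.
  by have := Hdeep _ tM bMi bMj; rewrite leqNgt (depth_lt HN pr).
move: (HN); rewrite inE => /orP[/imsetP[z _ eN]|/imsetP[p pin eN]].
  by move: xN yN; rewrite eN !inE => /eqP e1 /eqP e2; rewrite e2 -e1 xCl in yCl.
have [[t1 t2 g1 g2] [n1 n2 dis]] := TF1 pin.
have sCl' : Cl \subset p.1 :|: p.2 by rewrite -eN.
have yN' : y \in p.1 :|: p.2 by rewrite -eN.
have xN' := xN; rewrite eN inE in xN'; case/orP: xN' => xp.
- have s := cl_child g1 g2 dis HCl sCl' yN' yCl xCl xp.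
  exact: (fin _ _ t1 n2 dis eN s).
- have dis' : forall z, z \in p.2 -> z \in p.1 -> False by move=> z a b; exact: dis _ b a.
  rewrite setUC in eN sCl' yN'.
  have s := cl_child g2 g1 dis' HCl sCl' yN' yCl xCl xp.
  exact: (fin _ _ t2 n1 dis' eN s).
Qed.

Lemma merge_step (eta : R) P Ci Cj Q : part P -> 2 / 3 < eta ->
  merge_allowed eta T P Ci Cj -> merge_result eta ms P Ci Cj Q ->
  part Q /\ (delta_cc Q T < delta_cc P T)%N.
Proof.
move=> pP he [HCi HCj nij [Cl /and3P[HCl bCli bClj]]] [N [HN bNi bNj Hdeep eQ]].
have [xi xiCi] := part_ne0 pP HCi.
have nCi : Ci != set0 by apply/set0Pn; exists xi.
have he' : 1 / 2 < eta by lra.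
have sNCl := N_sub_Cl HN Hdeep bNi bCli bClj HCl nCi he'.
move: eQ; case: ifP => [le|gt] eQ.
- exact: (merge_step1 pT pP HCi HCj nij HCl he bCli bNj sNCl le eQ).
- have nji : Cj != Ci by rewrite eq_sym.
  apply: (merge_step1 pT pP HCj HCi nji HCl he bClj bNi sNCl).
  + by apply: ltnW; rewrite ltnNge gt.
  + by rewrite eQ; congr (_ :\ _); congr (_ :|: _); [exact: setUC | rewrite !setDDl setUC].
Qed.

End Final.

Unset Implicit Arguments.
Set Strict Implicit.
From mathcomp Require Import all_boot all_order all_algebra.
Import Order.TTheory GRing.Theory Num.Theory.
Local Open Scope ring_scope.

Theorem theorem15 (R : realFieldType) (X : finType) (S : X -> X -> R)
  (T P0 : {set {set X}}) (ms : seq ({set X} * {set X})) (eta : R)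
  (Ps : seq {set {set X}}) :
  (forall x y, S x y = S y x) ->
  partition T [set: X] ->
  stable S T ->
  partition P0 [set: X] ->
  avg_linkage_tree S ms ->
  2 / 3 < eta ->
  edit_run eta T ms P0 Ps ->
  (size Ps <= delta_cc P0 T)%N.
Proof.
move=> Ssym HT Hstab HP0 Hms he Hrun.
have pT := partition_part HT.
have pP0 := partition_part HP0.
have TF1 := ms_facts pT Hstab Ssym Hms.
have TF2 := tree_good pT Hstab Ssym Hms.
have IH : forall i, (i <= size Ps)%N -> part (nth P0 (P0 :: Ps) i) /\
    (delta_cc (nth P0 (P0 :: Ps) i) T + i <= delta_cc P0 T)%N.
  elim => [_|i IH Hi]; first by split => //; rewrite addn0.
  have [pPi dPi] := IH (ltnW Hi).
  have [_ st] := Hrun i Hi.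
  change (nth P0 (P0 :: Ps) i.+1) with (nth P0 Ps i).
  have step : part (nth P0 Ps i) /\
      (delta_cc (nth P0 Ps i) T < delta_cc (nth P0 (P0 :: Ps) i) T)%N.
    case: st => [[C [al re]]|[Ci [Cj [al re]]]].
    - exact: (split_step pT TF1 pPi al re).
    - exact: (merge_step pT TF1 TF2 pPi he al re).
  case: step => pQ dQ; split => //.
  by rewrite addnS; apply: leq_trans dPi; rewrite ltn_add2r.
have [_ d] := IH (size Ps) (leqnn _).
by apply: leq_trans d; rewrite leq_addl.
Qed.
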